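(* Let $x_1,\dots,x_n\in\mathbb{R}^d$ and $y_1,\dots,y_n\in\{0,1\}$, let $R>0$ satisfy $\|x_i\|_2\le R$ for all $i$, let $\ell(\beta)=\sum_{i=1}^n\{y_ix_i^T\beta-\log(1+e^{x_i^T\beta})\}$ and let $\hat\beta$ be a maximizer of $\ell$. Let $L\ge1$ be an integer, $z_1,\dots,z_L\in\mathbb{R}$, $F_L(a)=L^{-1}\sum_{l=1}^L1\{a\ge z_l\}$, and $\nabla\tilde\ell(\beta)=\sum_{i=1}^n\{x_iy_i-x_iF_L(x_i^T\beta)\}$. Suppose $\beta\in\mathbb{R}^d$ satisfies $\|\nabla\tilde\ell(\beta)\|_2\le nRL^{-1}$. Let $\hat\lambda_{\min}$ be the smallest eigenvalue of the Fisher information matrix $I(\cdot)=-n^{-1}\nabla^2\ell(\cdot)$ over the line segment between $\beta$ and $\hat\beta$, i.e. $\hat\lambda_{\min}=\inf_{a\in[0,1]}\lambda_{\min}\bigl(I(a\beta+(1-a)\hat\beta)\bigr)$, and suppose $\hat\lambda_{\min}>0$. Then $$\|\beta-\hat\beta\|_2\le\frac{R\bigl(L^{-1}+\sup_{a\in\mathbb{R}}|F_L(a)-\sigma(a)|\bigr)}{\hat\lambda_{\min}},$$ where $\sigma(a)=(1+e^{-a})^{-1}$.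
   Context: $\nabla^2\ell(\beta)=-\sum_i\sigma(x_i^T\beta)(1-\sigma(x_i^T\beta))x_ix_i^T$ is the Hessian of the logistic log-likelihood $\ell$. $\nabla\tilde\ell$ is the approximate gradient in which the logistic function $\sigma$ is replaced by the empirical CDF $F_L$ of the points $z_1,\dots,z_L$ (in the paper, independent logistic draws). For a symmetric matrix $B$, $\lambda_{\min}(B)$ is its smallest eigenvalue. *)

(* Defs.v *)
From HB Require Import structures.
From mathcomp Require Import all_boot all_order all_algebra.
From mathcomp Require Import all_classical all_reals all_analysis.
Set Implicit Arguments. Unset Strict Implicit. Unset Printing Implicit Defensive.
Import Order.TTheory GRing.Theory Num.Theory.
Local Open Scope classical_set_scope.
Local Open Scope ring_scope.

Section Defs.
Variable R : realType.

Definition dotv (d : nat) (u v : 'cV[R]_d) : R := (u^T *m v) 0 0.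

Definition norm2 (d : nat) (v : 'cV[R]_d) : R := Num.sqrt (dotv v v).

Definition sigma (a : R) : R := (1 + expR (- a))^-1.

Definition loglik (n d : nat) (x : 'I_n -> 'cV[R]_d) (y : 'I_n -> bool)
  (beta : 'cV[R]_d) : R :=
  \sum_(i < n) ((y i)%:R * dotv (x i) beta - ln (1 + expR (dotv (x i) beta))).

Definition hessian (n d : nat) (x : 'I_n -> 'cV[R]_d) (beta : 'cV[R]_d)
  : 'M[R]_d :=
  - \sum_(i < n) ((sigma (dotv (x i) beta) * (1 - sigma (dotv (x i) beta)))
                   *: (x i *m (x i)^T)).

Definition fisher (n d : nat) (x : 'I_n -> 'cV[R]_d) (beta : 'cV[R]_d)
  : 'M[R]_d := - ((n%:R)^-1 *: hessian x beta).

Definition lambda_min (d : nat) (B : 'M[R]_d) : R :=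
  inf [set a : R | eigenvalue B a].

Definition FL (L : nat) (z : 'I_L -> R) (a : R) : R :=
  (L%:R)^-1 * \sum_(l < L) (if z l <= a then 1 else 0).

Definition grad_approx (n d L : nat) (x : 'I_n -> 'cV[R]_d)
  (y : 'I_n -> bool) (z : 'I_L -> R) (beta : 'cV[R]_d) : 'cV[R]_d :=
  \sum_(i < n) ((y i)%:R *: x i - FL z (dotv (x i) beta) *: x i).

End Defs.

(* Main.v *)
Require Import Defs.
From HB Require Import structures.
From mathcomp Require Import all_boot all_order all_algebra.
From mathcomp Require Import all_classical all_reals all_analysis.
Import Order.TTheory GRing.Theory Num.Theory.
Import numFieldNormedType.Exports.
Local Open Scope classical_set_scope.
Local Open Scope ring_scope.
From mathcomp Require Import ring lra.
Set Implicit Arguments. Unset Strict Implicit. Unset Printing Implicit Defensive.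
Definition bf (R : realType) d (M : 'M[R]_d) (a b : 'rV[R]_d) : R := (a *m M *m b^T) 0 0.

Lemma bfDl (R : realType) d (M : 'M[R]_d) a b c : bf M (a + b) c = bf M a c + bf M b c.
Proof. by rewrite /bf !mulmxDl mxE. Qed.
Lemma bfZl (R : realType) d (M : 'M[R]_d) t a c : bf M (t *: a) c = t * bf M a c.
Proof. by rewrite /bf -!scalemxAl mxE. Qed.
Lemma bfDr (R : realType) d (M : 'M[R]_d) a b c : bf M a (b + c) = bf M a b + bf M a c.
Proof. by rewrite /bf linearD /= !mulmxDr mxE. Qed.
Lemma bfZr (R : realType) d (M : 'M[R]_d) t a c : bf M a (t *: c) = t * bf M a c.
Proof. by rewrite /bf linearZ /= -!scalemxAr mxE. Qed.
Lemma bfC (R : realType) d (M : 'M[R]_d) a b : M^T = M -> bf M a b = bf M b a.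
Proof.
move=> HM; rewrite /bf; transitivity ((a *m M *m b^T)^T 0 0); first by rewrite [RHS]mxE.
by rewrite !trmx_mul trmxK HM mulmxA.
Qed.
Lemma bf1E (R : realType) d (a b : 'rV[R]_d) : bf 1%:M a b = \sum_j a 0 j * b 0 j.
Proof. by rewrite /bf mulmx1 mxE; apply: eq_bigr => j _; rewrite mxE. Qed.
Lemma bf1_ge0 (R : realType) d (a : 'rV[R]_d) : 0 <= bf 1%:M a a.
Proof. by rewrite bf1E sumr_ge0 // => j _; rewrite -expr2 sqr_ge0. Qed.
Lemma bf1_eq0 (R : realType) d (a : 'rV[R]_d) : bf 1%:M a a = 0 -> a = 0.
Proof.
rewrite bf1E => /eqP; rewrite psumr_eq0; last by move=> j _; rewrite -expr2 sqr_ge0.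
move=> /allP H; apply/rowP => j; rewrite mxE.
by have := H j (mem_index_enum j); rewrite /= mulf_eq0 orbb => /eqP.
Qed.

Lemma quad_null (R : realType) (N c : R) : 0 <= N -> (forall t, 0 <= 2 * t * N + t ^+ 2 * c) -> N = 0.
Proof.
move=> N0 H; case: (lerP c 0) => hc.
  have := H (-1); nra.
have := H (- N / c). 
have ->: 2 * (- N / c) * N + (- N / c) ^+ 2 * c = - (N ^+ 2 / c).
  by field; rewrite gt_eqF.
rewrite oppr_ge0 => h; have : 0 <= N ^+ 2 / c by rewrite divr_ge0 ?sqr_ge0 ?ltW.
move=> h2; have : N ^+ 2 / c = 0 by apply/eqP; rewrite eq_le h h2.
move/eqP; rewrite mulf_eq0 invr_eq0 (gt_eqF hc) orbF sqrf_eq0 => /eqP //.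
Qed.

Lemma psd_null (R : realType) d (K : 'M[R]_d) (u : 'rV[R]_d) : K^T = K ->
  (forall p, 0 <= bf K p p) -> bf K u u = 0 -> u *m K = 0.
Proof.
move=> HK Hp Hu; set w := u *m K.
have Hwu : bf K w u = bf 1%:M w w.
  by rewrite /bf mulmx1 -mulmxA -[K *m u^T]trmxK trmx_mul trmxK HK.
apply: bf1_eq0; apply: (@quad_null _ _ (bf K w w)); first exact: bf1_ge0.
move=> t; have := Hp (u + t *: w).
rewrite !(bfDl, bfDr, bfZl, bfZr) Hu (bfC u w HK) Hwu.
by congr (0 <= _); ring.
Qed.

Lemma contsum (T : topologicalType) (R : realType) n (f : 'I_n -> T -> R) :
  (forall i, continuous (f i)) -> continuous (fun x => \sum_(i < n) f i x).
Proof.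
elim: n f => [|n IH] f Hf.
  have -> : (fun x => \sum_(i < 0) f i x) = (fun=> 0) by apply/funext => x; rewrite big_ord0.
  exact: cst_continuous.
have -> : (fun x => \sum_(i < n.+1) f i x) =
   (fun x => \sum_(i < n) f (widen_ord (leqnSn n) i) x) + f ord_max.
  by apply/funext => x; rewrite big_ord_recr.
move=> x; apply: continuousD; first exact: (IH (fun i => f (widen_ord (leqnSn n) i))).
exact: Hf.
Qed.

Lemma bfE (R : realType) d (M : 'M[R]_d) a b :
  bf M a b = \sum_k (\sum_j a 0 j * M j k) * b 0 k.
Proof. by rewrite /bf mxE; apply: eq_bigr => k _; rewrite !mxE. Qed.

Lemma bf_cont (R : realType) d (M : 'M[R]_d) : continuous (fun r : 'rV[R]_d => bf M r r).
Proof.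
have -> : (fun r : 'rV[R]_d => bf M r r) = (fun r => \sum_k (\sum_j r 0 j * M j k) * r 0 k).
  by apply/funext => r; rewrite bfE.
apply: contsum => k r.
apply: (@continuousM _ _ (fun r : 'rV[R]_d => \sum_j r 0 j * M j k) (fun r => r 0 k)).
  apply: (contsum (f := fun j (r : 'rV[R]_d) => r 0 j * M j k)) => j r'.
  apply: (@continuousM _ _ (fun r : 'rV[R]_d => r 0 j) (fun=> M j k)).
    exact: coord_continuous.
  exact: cst_continuous.
exact: coord_continuous.
Qed.

Lemma bf0l (R : realType) d (M : 'M[R]_d) b : bf M 0 b = 0.
Proof. by rewrite /bf !mul0mx mxE. Qed.

Lemma bfBs (R : realType) d (M : 'M[R]_d) (m : R) a b :
  bf (M - m%:M) a b = bf M a b - m * bf 1%:M a b.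
Proof.
rewrite /bf mulmxBr mul_mx_scalar mulmxBl -scalemxAl mulmx1 [LHS]mxE.
by rewrite [X in _ + X]mxE [X in - X]mxE.
Qed.

Lemma rayleigh (R : realType) d (M : 'M[R]_d) : (0 < d)%N -> M^T = M ->
  exists m, eigenvalue M m /\ forall p, m * bf 1%:M p p <= bf M p p.
Proof.
move=> d0 HM.
pose S := [set r : 'rV[R]_d | bf 1%:M r r = 1].
have S0 : S !=set0.
  exists (\row_j ((nat_of_ord j == 0%N)%:R : R)); rewrite /S /= bf1E.
  rewrite (bigD1 (Ordinal d0)) //= big1 => [|j /negbTE hj]; rewrite !mxE /=.
    by rewrite ?eqxx mulr1 addr0.
  have -> : (nat_of_ord j == 0%N) = false.
    by apply/negbTE; apply: contraFN hj => /eqP h; apply/eqP/val_inj.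
  by rewrite mulr0.
have Scl : closed S.
  have -> : S = (fun r => bf 1%:M r r) @^-1` [set x | x = 1] by [].
  apply: preimage_closed; last exact: closed_eq.
  by move=> r _; apply: bf_cont.
have Sbd : bounded_set S.
  exists 1; split => // M' M1 v Sv.
  rewrite /Num.norm /= mx_normrE.
  apply: bigmax_le => [|[i j] _ /=]; first by rewrite ltW // (lt_trans ltr01).
  apply: le_trans (ltW M1).
  rewrite (ord1 i) -(expr_le1 (n:=2)) // real_normK ?num_real //.
  move: Sv; rewrite /S /= bf1E (bigD1 j) //= -expr2 => <-.
  by rewrite lerDl sumr_ge0 // => k _; rewrite -expr2 sqr_ge0.
have Scp : compact S by exact: bounded_closed_compact.
have [c cS cmin] := EVT_min_rV S0 Scp (continuous_subspaceT (@bf_cont _ _ M)).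
move: cS; rewrite inE /S /= => c1.
pose m := bf M c c.
have Hall : forall p, m * bf 1%:M p p <= bf M p p.
  move=> p; have [->|p0] := eqVneq p 0; first by rewrite !bf0l mulr0.
  have hp : 0 < bf 1%:M p p.
    rewrite lt_def bf1_ge0 andbT; by apply: contra p0 => /eqP/bf1_eq0 ->.
  set s := Num.sqrt (bf 1%:M p p).
  have s0 : 0 < s by rewrite sqrtr_gt0.
  have ss : s ^+ 2 = bf 1%:M p p by rewrite sqr_sqrtr // ltW.
  have := cmin (s^-1 *: p); rewrite inE /S /= !(bfZl, bfZr).
  have -> : s^-1 * (s^-1 * bf 1%:M p p) = 1.
    by rewrite -ss; field; rewrite gt_eqF.
  move=> /(_ erefl) h.
  have : m * s ^+ 2 <= (s^-1 * (s^-1 * bf M p p)) * s ^+ 2.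
    by rewrite ler_pM2r // exprn_gt0.
  have -> : s ^-1 * (s ^-1 * bf M p p) * s ^+ 2 = bf M p p.
    by field; rewrite gt_eqF.
  by rewrite ss.
exists m; split=> //.
apply/eigenvalueP; exists c; last first.
  by apply/eqP => c0; move: c1; rewrite c0 bf0l => /eqP; rewrite eq_sym oner_eq0.
have HK : (M - m%:M)^T = M - m%:M by rewrite linearB /= tr_scalar_mx HM.
have Hpsd : forall p, 0 <= bf (M - m%:M) p p by move=> p; rewrite bfBs subr_ge0 Hall.
have := psd_null (u:=c) HK Hpsd; rewrite bfBs c1 mulr1 subrr => /(_ erefl).
by rewrite mulmxBr mul_mx_scalar => /eqP; rewrite subr_eq0 => /eqP.
Qed.
Lemma is_derive_aff (R : realType) (c u t : R) : is_derive t 1 (fun s => c + s * u) u.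
Proof.
have -> : (fun s => c + s * u) = cst c + u \*: id by apply/funext => s /=; rewrite mulrC.
have h := is_deriveD (is_derive_cst c t 1) (is_deriveZ u (is_derive_id t 1)).
by apply: is_derive_eq h _; rewrite add0r /= ?mulr1 ?scaler1.
Qed.

Lemma sigma_gt0 (R : realType) (a : R) : 0 < sigma a.
Proof. by rewrite /sigma invr_gt0 addr_gt0 // expR_gt0. Qed.
Lemma sigma_lt1 (R : realType) (a : R) : sigma a < 1.
Proof. by rewrite /sigma invf_lt1 ?addr_gt0 ?expR_gt0 // ltrDl expR_gt0. Qed.

Lemma is_derive_sigma (R : realType) (s : R) : is_derive s 1 (@sigma R) (sigma s * (1 - sigma s)).
Proof.
have hf : is_derive s 1 (fun r : R => 1 + expR (- r)) (expR (- s) * -1).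
  have -> : (fun r : R => 1 + expR (- r)) = cst 1 + (expR \o -%R) by [].
  have h1 : is_derive s 1 (expR \o -%R) (expR (- s) * - 1) :=
    is_derive1_comp (is_derive_expR (- s)) (is_deriveNid s 1).
  have h2 := is_deriveD (is_derive_cst (1:R) s 1) h1.
  by apply: is_derive_eq h2 _; rewrite add0r.
have h0 : 1 + expR (- s) != 0 by rewrite gt_eqF // addr_gt0 // expR_gt0.
have h3 := @is_deriveV R (fun r : R => 1 + expR (- r)) s _ 1 h0 hf.
have -> : @sigma R = (fun y => (1 + expR (- y))^-1) by [].
apply: is_derive_eq h3 _.
rewrite /sigma /=; have := expR_gt0 (- s); set e := expR (- s) => e0.
rewrite /GRing.scale /=; clearbody e; by field; rewrite gt_eqF // addr_gt0.
Qed.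

Lemma is_derive_lse (R : realType) (s : R) : is_derive s 1 (fun r : R => ln (1 + expR r)) (sigma s).
Proof.
have -> : (fun r : R => ln (1 + expR r)) = (@ln R) \o (cst 1 + expR) by [].
have h0 : 0 < 1 + expR s by rewrite addr_gt0 // expR_gt0.
have h2 := is_deriveD (is_derive_cst (1:R) s 1) (is_derive_expR s).
have h3 := @is_derive1_comp R (@ln R) (cst 1 + expR) s _ _ (is_derive1_ln h0) h2.
apply: is_derive_eq h3 _.
rewrite /sigma /= add0r expRN; have := expR_gt0 s; set e := expR s => e0.
by field; rewrite ?gt_eqF // ?addr_gt0.
Qed.

Lemma lam_bound (R : realType) d (M : 'M[R]_d) : (0 < d)%N -> M^T = M ->
  forall p, lambda_min M * bf 1%:M p p <= bf M p p.
Proof.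
move=> d0 HM p; have [m [em Hm]] := rayleigh d0 HM.
have lb : forall a, eigenvalue M a -> m <= a.
  move=> a /eigenvalueP [w wM w0].
  have hw : 0 < bf 1%:M w w.
    by rewrite lt_def bf1_ge0 andbT; apply: contra w0 => /eqP/bf1_eq0 ->.
  have e : bf M w w = a * bf 1%:M w w.
    by rewrite /bf wM -scalemxAl mxE mulmx1.
  by have := Hm w; rewrite e ler_pM2r.
have hl : lambda_min M <= m.
  by rewrite /lambda_min; apply: ge_inf => //; exists m.
by apply: le_trans (Hm p); apply: ler_wpM2r => //; exact: bf1_ge0.
Qed.

Lemma dotv_bf (R : realType) d (M : 'M[R]_d) (a b : 'cV[R]_d) :
  dotv a (M *m b) = bf M a^T b^T.
Proof. by rewrite /dotv /bf trmxK mulmxA. Qed.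
Lemma dotv_bf1 (R : realType) d (a b : 'cV[R]_d) : dotv a b = bf 1%:M a^T b^T.
Proof. by rewrite -dotv_bf mul1mx. Qed.
Lemma dotvC (R : realType) d (a b : 'cV[R]_d) : dotv a b = dotv b a.
Proof. by rewrite !dotv_bf1 bfC // trmx1. Qed.
Lemma dotvDr (R : realType) d (a b c : 'cV[R]_d) : dotv a (b + c) = dotv a b + dotv a c.
Proof. by rewrite !dotv_bf1 linearD /= bfDr. Qed.
Lemma dotvZr (R : realType) d (a b : 'cV[R]_d) t : dotv a (t *: b) = t * dotv a b.
Proof. by rewrite !dotv_bf1 linearZ /= bfZr. Qed.
Lemma dotvBr (R : realType) d (a b c : 'cV[R]_d) : dotv a (b - c) = dotv a b - dotv a c.
Proof. by rewrite -scaleN1r dotvDr dotvZr mulN1r. Qed.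
Lemma dotv_sumr (R : realType) d n (a : 'cV[R]_d) (f : 'I_n -> 'cV[R]_d) :
  dotv a (\sum_i f i) = \sum_i dotv a (f i).
Proof.
elim/big_ind2: _ => //; first by rewrite /dotv mulmx0 mxE.
by move=> b1 r1 b2 r2 <- <-; rewrite dotvDr.
Qed.
Lemma dotv_ge0 (R : realType) d (a : 'cV[R]_d) : 0 <= dotv a a.
Proof. by rewrite dotv_bf1 bf1_ge0. Qed.
Lemma norm2_sqr (R : realType) d (a : 'cV[R]_d) : norm2 a ^+ 2 = dotv a a.
Proof. by rewrite /norm2 sqr_sqrtr // dotv_ge0. Qed.
Lemma norm2_ge0 (R : realType) d (a : 'cV[R]_d) : 0 <= norm2 a.
Proof. exact: sqrtr_ge0. Qed.

Lemma CS (R : realType) d (a b : 'cV[R]_d) : `|dotv a b| <= norm2 a * norm2 b.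
Proof.
have key : dotv a b ^+ 2 <= dotv a a * dotv b b.
  rewrite !dotv_bf1; set A := bf _ a^T a^T; set B := bf _ b^T b^T; set C := bf _ a^T b^T.
  have H t : 0 <= A + 2 * t * C + t ^+ 2 * B.
    have := bf1_ge0 (a^T + t *: b^T).
    rewrite !(bfDl, bfDr, bfZl, bfZr) (bfC b^T a^T) ?trmx1 //.
    by rewrite -/A -/B -/C; congr (0 <= _); ring.
  have B0 : 0 <= B by apply: bf1_ge0.
  case: (eqVneq B 0) => hB.
    have hb : b^T = 0 by apply: bf1_eq0.
    by rewrite hB mulr0 /C hb /bf trmx0 mulmx0 mxE expr0n.
  have Bp : 0 < B by rewrite lt_def hB B0.
  have := H (- C / B).
  have -> : A + 2 * (- C / B) * C + (- C / B) ^+ 2 * B = A - C ^+ 2 / B.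
    by field.
  rewrite subr_ge0 ler_pdivrMr //; by rewrite mulrC.
rewrite /norm2 -sqrtrM ?dotv_ge0 // -sqrtr_sqr.
exact: ler_wsqrtr.
Qed.

Lemma fisher_sym (R : realType) n d (x : 'I_n -> 'cV[R]_d) p : (fisher x p)^T = fisher x p.
Proof.
rewrite /fisher /hessian !linearN /= linearZ /= linear_sum /=; do 3 congr (_ _).
by apply: eq_bigr => i _; rewrite linearZ /= trmx_mul trmxK.
Qed.

Lemma fisher_quad (R : realType) n d (x : 'I_n -> 'cV[R]_d) p v :
  dotv v (fisher x p *m v) = (n%:R)^-1 *
    \sum_i (sigma (dotv (x i) p) * (1 - sigma (dotv (x i) p))) * dotv (x i) v ^+ 2.
Proof.
rewrite /fisher /hessian scalerN opprK -scalemxAl dotvZr mulmx_suml dotv_sumr.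
congr (_ * _); apply: eq_bigr => i _.
rewrite -scalemxAl dotvZr; congr (_ * _).
rewrite /dotv -!mulmxA mulmxA [(_ *m _) 0 0]mxE big_ord1 expr2.
have -> : (v^T *m x i) 0 0 = ((x i)^T *m v) 0 0.
  exact: (dotvC v (x i)).
done.
Qed.

Lemma deriv_sum_fun (R : realType) n (h : 'I_n -> R -> R) (dh : 'I_n -> R) (t : R) :
  (forall i, is_derive t 1 (h i) (dh i)) ->
  is_derive t 1 (fun s => \sum_(i < n) h i s) (\sum_(i < n) dh i).
Proof.
move=> H; have := is_derive_sum H.
have -> : (\sum_(i < n) h i) = (fun s => \sum_(i < n) h i s).
  by apply/funext => s; rewrite fct_sumE.
done.
Qed.

Theorem lemma3 (R : realType) (n d : nat)
  (x : 'I_n -> 'cV[R]_d) (y : 'I_n -> bool) (Rad : R)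
  (hRad : 0 < Rad) (hx : forall i, norm2 (x i) <= Rad)
  (betahat : 'cV[R]_d) (hmax : forall b : 'cV[R]_d, loglik x y b <= loglik x y betahat)
  (L : nat) (hL : (1 <= L)%N) (z : 'I_L -> R)
  (beta : 'cV[R]_d)
  (hgrad : norm2 (grad_approx x y z beta) <= n%:R * Rad / L%:R)
  (hlam : 0 < inf [set lambda_min (fisher x (a *: beta + (1 - a) *: betahat))
                   | a in [set a : R | 0 <= a <= 1]]) :
  norm2 (beta - betahat) <=
    Rad * ((L%:R)^-1 + sup [set `|FL z a - sigma a| | a in [set: R]])
    / inf [set lambda_min (fisher x (a *: beta + (1 - a) *: betahat))
           | a in [set a : R | 0 <= a <= 1]].
Proof.
set T := [set lambda_min _ | a in _] in hlam *.
set s := sup _. set mu := inf T.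
set v := beta - betahat.
have Lp : 0 < (L%:R : R) by rewrite ltr0n.
have FL01 a : 0 <= FL z a <= 1.
  rewrite /FL; apply/andP; split.
    apply: mulr_ge0; first by rewrite invr_ge0 ler0n.
    by apply: sumr_ge0 => l _; case: ifP.
  have hs : \sum_(l < L) (if z l <= a then 1 else 0 : R) <= L%:R.
    have -> : (L%:R : R) = \sum_(l < L) (1 : R) by rewrite sumr_const card_ord.
    by apply: ler_sum => l _; case: ifP.
  apply: le_trans (ler_wpM2l _ hs) _; first by rewrite invr_ge0 ler0n.
  by rewrite mulVf // gt_eqF.
have Fs a : `|FL z a - sigma a| <= s.
  apply: ub_le_sup; last by exists a.
  exists 1 => _ [b _ <-]; rewrite ler_norml; have := FL01 b; have := sigma_gt0 b; have := sigma_lt1 b.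
  move=> h1 h2 /andP[h3 h4]; apply/andP; split; lra.
have s0 : 0 <= s := le_trans (normr_ge0 _) (Fs 0).
have mu0 : 0 < mu := hlam.
have RHS0 : 0 <= Rad * ((L%:R)^-1 + s) / mu.
  apply: divr_ge0; last exact: ltW.
  apply: mulr_ge0; first exact: ltW.
  by apply: addr_ge0 => //; rewrite invr_ge0 ler0n.
have [N0|N0] := eqVneq (norm2 v) 0; first by rewrite N0.
have Np : 0 < norm2 v by rewrite lt_def N0 norm2_ge0.
have dpos : (0 < d)%N.
  rewrite lt0n; apply/eqP => d0; move: N0; rewrite /norm2 /dotv mxE big1 ?sqrtr0 ?eqxx //.
  by move=> j; have := ltn_ord j; rewrite {2}d0.
pose c i := dotv (x i) betahat.
pose u i := dotv (x i) v.
have pE t : t *: beta + (1 - t) *: betahat = betahat + t *: v.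
  by apply/matrixP => i j; rewrite !mxE; ring.
have dotp i t : dotv (x i) (betahat + t *: v) = c i + t * u i by rewrite dotvDr dotvZr.
have betaE : beta = betahat + 1 *: v by rewrite scale1r /v addrC subrK.
pose h t := \sum_i ((y i)%:R * (c i + t * u i) - ln (1 + expR (c i + t * u i))).
have hE t : loglik x y (betahat + t *: v) = h t.
  by rewrite /loglik; apply: eq_bigr => i _; rewrite dotp.
have hmax0 t : h t <= h 0.
  by rewrite -hE -hE scale0r addr0; apply: hmax.
pose dh t := \sum_i ((y i)%:R * u i - sigma (c i + t * u i) * u i).
have hd (t : R) : is_derive t 1 h (dh t).
  apply: deriv_sum_fun => i.
  have a1 := is_deriveZ (y i)%:R (is_derive_aff (c i) (u i) t).
  have a2 := @is_derive1_comp R (fun r => ln (1 + expR r)) (fun s => c i + s * u i) t _ _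
    (is_derive_lse (c i + t * u i)) (is_derive_aff (c i) (u i) t).
  have a3 := is_deriveB a1 a2.
  by apply: is_derive_eq a3 _.
have dh0 : dh 0 = 0.
  have H1 : is_derive (0:R) 1 h 0.
    apply: (@derive1_at_max R h (-1) 1 0).
    - lra.
    - by move=> t _; exact: (@ex_derive _ _ _ _ _ _ _ (hd t)).
    - by rewrite in_itv /= ltrN10 ltr01.
    - by move=> t _; exact: hmax0.
  by rewrite -(@derive_val _ _ _ _ _ _ _ (hd 0)) (@derive_val _ _ _ _ _ _ _ H1).
pose dg t := \sum_i (- (sigma (c i + t * u i) * (1 - sigma (c i + t * u i)) * u i) * u i).
have gd (t : R) : is_derive t 1 dh (dg t).
  apply: deriv_sum_fun => i.
  have b1 := @is_derive1_comp R (@sigma R) (fun s => c i + s * u i) t _ _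
    (is_derive_sigma (c i + t * u i)) (is_derive_aff (c i) (u i) t).
  have b2 := is_deriveM b1 (is_derive_cst (u i) t 1).
  have b3 := is_deriveB (is_derive_cst ((y i)%:R * u i) t 1) b2.
  apply: is_derive_eq b3 _.
  rewrite /GRing.scale /=; ring.
have gcont : {within `[0, 1], continuous dh}.
  apply/continuous_subspaceT => r.
  exact/differentiable_continuous/derivable1_diffP/(@ex_derive _ _ _ _ _ _ _ (gd r)).
have [xi xiI Hmvt] := MVT ltr01 (fun t _ => gd t) gcont.
move: Hmvt; rewrite dh0 subr0 subr0 mulr1 => dh1.
have xi01 : 0 <= xi <= 1.
  by move: xiI; rewrite in_itv /= => /andP[h1 h2]; rewrite ltW // ltW.
pose p := xi *: beta + (1 - xi) *: betahat.
have dotpx i : dotv (x i) p = c i + xi * u i by rewrite /p pE dotp.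
pose W := \sum_i (sigma (c i + xi * u i) * (1 - sigma (c i + xi * u i))) * u i ^+ 2.
have hW : - dh 1 = W.
  by rewrite dh1 /dg -sumrN; apply: eq_bigr => i _; ring.
have hQ : dotv v (fisher x p *m v) = n%:R^-1 * W.
  by rewrite fisher_quad; congr (_ * _); apply: eq_bigr => i _; rewrite dotpx.
have Hlam : lambda_min (fisher x p) * dotv v v <= dotv v (fisher x p *m v).
  by rewrite dotv_bf dotv_bf1; apply: lam_bound dpos (fisher_sym x p) _.
have hlb : has_lbound T.
  have [//|hn] := pselect (has_lbound T).
  exfalso; move: mu0; rewrite /mu inf_out ?ltxx // => -[_]; exact: hn.
have muL : mu <= lambda_min (fisher x p) by apply: (ge_inf hlb); exists xi.
have HmuQ : mu * dotv v v <= n%:R^-1 * W.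
  rewrite -hQ; apply: le_trans Hlam; apply: ler_wpM2r => //; exact: dotv_ge0.
set N := norm2 v in N0 Np RHS0 *.
have dd : dotv v v = N ^+ 2 by rewrite norm2_sqr.
rewrite dd in HmuQ.
have hb i : c i + 1 * u i = dotv (x i) beta by rewrite -dotp -betaE.
set G := grad_approx x y z beta in hgrad.
have hG : dotv v G = \sum_i ((y i)%:R * u i - FL z (dotv (x i) beta) * u i).
  rewrite /G /grad_approx dotv_sumr; apply: eq_bigr => i _.
  by rewrite dotvBr !dotvZr (dotvC v (x i)).
have hW2 : W = - dotv v G +
    \sum_i (sigma (dotv (x i) beta) - FL z (dotv (x i) beta)) * u i.
  rewrite -hW /dh hG -!sumrN -big_split /=; apply: eq_bigr => i _; rewrite hb; ring.
have b1 : - dotv v G <= N * (n%:R * Rad / L%:R).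
  apply: (le_trans (y := `|dotv v G|)); first by rewrite -normrN ler_norm.
  apply: le_trans (CS v G) _; apply: ler_wpM2l => //; exact: norm2_ge0.
have b2 : \sum_i (sigma (dotv (x i) beta) - FL z (dotv (x i) beta)) * u i
    <= n%:R * (s * (Rad * N)).
  have -> : n%:R * (s * (Rad * N)) = \sum_(i < n) (s * (Rad * N)).
    by rewrite sumr_const card_ord mulr_natl.
  apply: ler_sum => i _.
  apply: le_trans (ler_norm _) _; rewrite normrM.
  apply: ler_pM; [exact: normr_ge0 | exact: normr_ge0 | by rewrite distrC; exact: Fs |].
  apply: le_trans (CS (x i) v) _; apply: ler_wpM2r; [exact: norm2_ge0 | exact: hx].
have Wub : W <= N * (n%:R * Rad / L%:R) + n%:R * (s * (Rad * N)).
  by rewrite hW2; apply: lerD.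
case: (posnP n) => [n0|npos].
  have n0' : (n%:R : R) = 0 by rewrite n0.
  rewrite n0' invr0 mul0r in HmuQ.
  have : 0 < mu * N ^+ 2 by rewrite mulr_gt0 // exprn_gt0.
  by move=> /lt_le_trans /(_ HmuQ); rewrite ltxx.
have nR : 0 < (n%:R : R) by rewrite ltr0n.
have HW : n%:R * (mu * N ^+ 2) <= W.
  by have := ler_wpM2l (ltW nR) HmuQ; rewrite [X in _ <= X]mulrA mulfV ?gt_eqF // mul1r.
rewrite ler_pdivlMr //.
have key : (n%:R * N) * (N * mu) <= (n%:R * N) * (Rad * ((L%:R)^-1 + s)).
  have e1 : (n%:R * N) * (N * mu) = n%:R * (mu * N ^+ 2) by ring.
  have e2 : (n%:R * N) * (Rad * ((L%:R)^-1 + s)) =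
            N * (n%:R * Rad / L%:R) + n%:R * (s * (Rad * N)) by field; rewrite gt_eqF.
  by rewrite e1 e2; apply: le_trans HW Wub.
by rewrite ler_pM2l ?mulr_gt0 // in key.
Qed.
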